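(* For a graph $G=(V,E)$ and integer $\tau\ge 1$ define $$Q_{\mathrm{Del\text{-}Deg}}(G,\tau)=-\tfrac12\sum_{v\in V,\ \deg_G(v)\ge\tau}(\deg_G(v)-\tau).$$ Then: (1) for fixed $G$, $Q_{\mathrm{Del\text{-}Deg}}(G,\tau)$ is non-decreasing in $\tau$ and equals $0$ for all $\tau\ge\deg(G)$; (2) for any two graphs $G,G'$ that differ in exactly one edge, $|Q_{\mathrm{Del\text{-}Deg}}(G,\tau)-Q_{\mathrm{Del\text{-}Deg}}(G',\tau)|\le 1$ for all $\tau$, i.e., its global sensitivity under edge neighboring is $1$; (3) if $G'$ is obtained from $G$ by adding one edge, then $Q_{\mathrm{Del\text{-}Deg}}(G,\tau)\ge Q_{\mathrm{Del\text{-}Deg}}(G',\tau)$ for every $\tau$.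
   Context: Graphs are finite, simple and undirected. $\deg_G(v)$ denotes the degree of node $v$ in $G$ and $\deg(G)=\max_{v}\deg_G(v)$ is the maximum degree. *)

(* Defs.v *)
From mathcomp Require Import all_boot all_order all_algebra.
Set Implicit Arguments. Unset Strict Implicit. Unset Printing Implicit Defensive.
Import Order.TTheory GRing.Theory Num.Theory.
Local Open Scope ring_scope.

Definition simple_graph (V : finType) (e : rel V) : Prop :=
  symmetric e /\ irreflexive e.

Definition deg (V : finType) (e : rel V) (v : V) : nat := #|[set u | e v u]|.

Definition maxdeg (V : finType) (e : rel V) : nat := (\max_(v : V) deg e v)%N.

Definition QDelDeg (V : finType) (e : rel V) (tau : nat) : rat :=
  - (1 / 2%:R) * \sum_(v : V | (tau <= deg e v)%N) ((deg e v)%:R - tau%:R).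

Definition differ_one_edge (V : finType) (e e' : rel V) : Prop :=
  exists a b : V, a != b /\
    forall x y : V, (e x y != e' x y) = ((x == a) && (y == b) || (x == b) && (y == a)).

Definition add_one_edge (V : finType) (e e' : rel V) : Prop :=
  exists a b : V, [/\ a != b, ~~ e a b &
    forall x y : V, e' x y = e x y || ((x == a) && (y == b) || (x == b) && (y == a))].

(* Main.v *)
Require Import Defs.
From mathcomp Require Import all_boot all_order all_algebra.
From mathcomp Require Import zify lra.
Import Order.TTheory GRing.Theory Num.Theory.
Set Implicit Arguments. Unset Strict Implicit.
Local Open Scope ring_scope.

Definition SS (V : finType) (e : rel V) (t : nat) : nat := (\sum_(v : V) (deg e v - t))%N.

Lemma QE (V : finType) (e : rel V) t : QDelDeg e t = - (1 / 2%:R) * (SS e t)%:R.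
Proof.
rewrite /QDelDeg /SS natr_sum; congr (_ * _).
rewrite [RHS](bigID (fun v => (t <= deg e v)%N)) /= [X in _ + X]big1 ?addr0.
  by apply: eq_bigr => v H; rewrite natrB.
by move=> v; rewrite -ltnNge => H; have -> : (deg e v - t = 0)%N by lia.

Qed.

Lemma deg_le1 (V : finType) (e e' : rel V) v w :
  (forall u, u != w -> e v u = e' v u) -> (deg e v <= deg e' v + 1)%N.
Proof.
move=> H; rewrite /deg -(cards1 w).
apply: leq_trans (leq_card_setU _ _); apply: subset_leq_card; apply/subsetP => u.
rewrite !inE; case: (eqVneq u w) => [->|Hu]; first by rewrite orbT.
by rewrite H // => ->.
Qed.

Lemma sum_ind (V : finType) (a : V) : (\sum_(v : V) (v == a : nat))%N = 1%N.
Proof.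
rewrite (bigD1 a) //= eqxx big1 // => v /negbTE ->; done.
Qed.

Lemma diff_bound (V : finType) (e e' : rel V) (a b : V) t : a != b ->
  (forall x y : V, (e x y != e' x y) = ((x == a) && (y == b) || (x == b) && (y == a))) ->
  (SS e t <= SS e' t + 2)%N.
Proof.
move=> ab H.
have Hd : forall v, (deg e v <= deg e' v + ((v == a) + (v == b)))%N.
  move=> v; case: (eqVneq v a) => [->|va].
    have := @deg_le1 V e e' a b; rewrite /=; move=> K.
    apply: leq_trans (K _) _; last by lia.
    move=> u ub; apply/eqP; apply/negPn; rewrite H; apply/negP => /orP [] /andP [/eqP E1 /eqP E2].
      by rewrite E2 eqxx in ub.
    by rewrite E1 eqxx in ab.
  case: (eqVneq v b) => [->|vb].
    have K := @deg_le1 V e e' b a.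
    apply: leq_trans (K _) _; last by lia.
    move=> u ua; apply/eqP; apply/negPn; rewrite H; apply/negP => /orP [] /andP [/eqP E1 /eqP E2].
      by rewrite E1 eqxx in ab.
    by rewrite E2 eqxx in ua.
  rewrite /deg addn0; apply: eq_leq; apply: eq_card => u; rewrite !inE.
  apply/eqP; apply/negPn; rewrite H; apply/negP => /orP [] /andP [/eqP E1 _]; [by rewrite E1 eqxx in va | by rewrite E1 eqxx in vb].
rewrite /SS.
apply: (@leq_trans (\sum_(v : V) ((deg e' v - t) + ((v == a) + (v == b))))%N).
  by apply: leq_sum => v _; have := Hd v; lia.
by rewrite big_split /= big_split /= !sum_ind.
Qed.

Theorem mainTheorem2 (V : finType) :
  (* (1) monotonicity and vanishing *)
  (forall e : rel V, simple_graph e ->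
     (forall t1 t2 : nat, (1 <= t1)%N -> (t1 <= t2)%N -> QDelDeg e t1 <= QDelDeg e t2) /\
     (forall t : nat, (1 <= t)%N -> (maxdeg e <= t)%N -> QDelDeg e t = 0)) /\
  (* (2) sensitivity at most 1 under edge neighbouring *)
  (forall e e' : rel V, simple_graph e -> simple_graph e' -> differ_one_edge e e' ->
     forall t : nat, (1 <= t)%N -> `|QDelDeg e t - QDelDeg e' t| <= 1) /\
  (* (3) adding an edge does not increase Q *)
  (forall e e' : rel V, simple_graph e -> simple_graph e' -> add_one_edge e e' ->
     forall t : nat, (1 <= t)%N -> QDelDeg e' t <= QDelDeg e t).
Proof.
split; [|split].
- move=> e _; split.
    move=> t1 t2 _ le; rewrite !QE.
    have : (SS e t2 <= SS e t1)%N.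
      by apply: leq_sum => v _; apply: leq_sub2l.
    rewrite -(ler_nat rat) => K; lra.
  move=> t _ le; rewrite QE /SS big1 ?mulr0 // => v _.
  apply/eqP; rewrite subn_eq0; apply: leq_trans le.
  by rewrite /maxdeg; apply: (@leq_bigmax_cond _ _ (fun v => deg e v) v).
- move=> e e' _ _ [a [b [ab H]]] t _.
  have K1 := diff_bound t ab H.
  have H' : forall x y : V, (e' x y != e x y) = ((x == a) && (y == b) || (x == b) && (y == a)).
    by move=> x y; rewrite eq_sym H.
  have K2 := diff_bound t ab H'.
  rewrite !QE; move: K1 K2; rewrite -!(ler_nat rat) !natrD => K1 K2.
  rewrite ler_norml; apply/andP; split; lra.
- move=> e e' _ _ [a [b [ab nab H]]] t _; rewrite !QE.
  have : (SS e t <= SS e' t)%N.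
    apply: leq_sum => v _; apply: leq_sub2r; rewrite /deg; apply: subset_leq_card.
    by apply/subsetP => u; rewrite !inE H => ->.
  rewrite -(ler_nat rat) => K; lra.
Qed.
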